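(* Let $n\ge 2$ and let $F_1,\ldots,F_n$ be finite fields with $|F_1|\le\cdots\le|F_n|$. If $\mathrm{char}(F_1)=2$, then $$\chi\big(\mathrm{Reg}(\Gamma(F_1\times\cdots\times F_n))\big)=\omega\big(\mathrm{Reg}(\Gamma(F_1\times\cdots\times F_n))\big)=(|F_2|-1)\cdots(|F_n|-1).$$
   Context: For a commutative ring $R$ with identity, $Z(R)$ is the set of zero-divisors (including $0$) and $\mathrm{Reg}(R)=R\setminus Z(R)$. The total graph $T(\Gamma(R))$ is the simple graph with vertex set $R$ in which distinct $x,y$ are adjacent iff $x+y\in Z(R)$; $\mathrm{Reg}(\Gamma(R))$ is its induced subgraph on $\mathrm{Reg}(R)$. $\chi$ and $\omega$ denote chromatic and clique number. *)

(* Defs.v *)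
From HB Require Import structures.
From mathcomp Require Import all_boot all_order all_algebra all_field.
Set Implicit Arguments. Unset Strict Implicit. Unset Printing Implicit Defensive.
Import GRing.Theory.
Local Open Scope ring_scope.

(* The graph has vertex set V (a subset of T) and adjacency relation adj;
   only pairs of distinct vertices of V matter (induced subgraph on V). *)
Section Graph.
Variables (T : finType) (V : {pred T}) (adj : rel T).

Definition colorable (k : nat) : bool :=
  [exists c : {ffun T -> 'I_k}, [forall x, forall y,
     [&& x \in V, y \in V, x != y & adj x y] ==> (c x != c y)]].

(* chromatic number: least k with a proper k-colouring (#|T| colours always suffice) *)
Definition chromatic_number : nat :=
  \big[minn/#|T|]_(k < #|T|.+1 | colorable k) k.

Definition is_clique (S : {set T}) : bool :=
  (S \subset V) && [forall x in S, forall y in S, (x != y) ==> adj x y].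

Definition clique_number : nat := \max_(S : {set T} | is_clique S) #|S|.
End Graph.

Section Product.
Variables (n : nat) (F : 'I_n -> finFieldType).

Definition prodF : finType := {dffun forall i : 'I_n, F i}.

Definition pzero : prodF := [ffun i => (0 : F i)].
Definition padd (x y : prodF) : prodF := [ffun i => x i + y i].
Definition pmul (x y : prodF) : prodF := [ffun i => x i * y i].

Definition zero_divisor (x : prodF) : bool :=
  (x == pzero) || [exists y : prodF, (y != pzero) && (pmul x y == pzero)].

Definition regular (x : prodF) : bool := ~~ zero_divisor x.

Definition total_adj : rel prodF := fun x y => zero_divisor (padd x y).
End Product.

(* Main.v *)
Require Import Defs.
From HB Require Import structures.
From mathcomp Require Import all_boot all_order all_algebra all_field perm.
Set Implicit Arguments. Unset Strict Implicit. Unset Printing Implicit Defensive.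
Section G.
Variables (T : finType) (V : {pred T}) (adj : rel T).

Lemma clique_le_col S k : is_clique V adj S -> colorable V adj k -> #|S| <= k.
Proof.
case/andP=> sSV /forall_inP cS /existsP[c /forallP cc].
have inj : {in S &, injective c}.
  move=> x y xS yS e; apply/eqP/negPn/negP=> nxy.
  have := cc x => /forallP /(_ y); rewrite (subsetP sSV) // (subsetP sSV) //.
  by rewrite nxy /= (implyP (forall_inP (cS x xS) y yS) nxy) e eqxx.
by rewrite -(card_in_imset inj); apply: leq_trans (max_card _) _; rewrite card_ord.
Qed.

Lemma chrom_le k : colorable V adj k -> k <= #|T| -> chromatic_number V adj <= k.
Proof.
move=> ck kT; have kT' : k < #|T|.+1 by rewrite ltnS.
rewrite /chromatic_number.
have : Ordinal kT' \in index_enum 'I_#|T|.+1 by rewrite mem_index_enum.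
elim: (index_enum _) => [|i r IH]; rewrite ?big_nil ?big_cons //= inE.
case/predU1P=> [<-|/IH]; first by rewrite ck geq_minl.
by case: (colorable V adj i) => //= h; rewrite geq_min h orbT.
Qed.

Lemma clique_le_chrom : clique_number V adj <= chromatic_number V adj.
Proof.
apply/bigmax_leqP=> S cS; rewrite /chromatic_number.
apply: (big_ind (fun x => #|S| <= x)); first exact: max_card.
  by move=> x y hx hy; rewrite leq_min hx hy.
by move=> i ci; apply: clique_le_col.
Qed.

Lemma clique_ge S : is_clique V adj S -> #|S| <= clique_number V adj.
Proof. by move=> cS; rewrite /clique_number (leq_bigmax_cond _ cS). Qed.
End G.
Section Psi. Import GRing.Theory. Local Open Scope ring_scope.
Lemma psi_ex (F0 F1 : finFieldType) : (#|F0| <= #|F1|)%N ->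
  exists psi : {ffun F0 -> F1}, (forall a, a != 0 -> psi a != 0) /\
     (forall a b, a != 0 -> b != 0 -> psi a + psi b = 0 -> a = b).
Proof.
move=> h.
have [c2|nc2] := boolP (2%N \in [pchar F1]).
  pose f (a : F0) : F1 := enum_val (widen_ord h (enum_rank a)).
  have finj : injective f.
    move=> a b /enum_val_inj /(congr1 val) /= /val_inj /enum_rank_inj. done.
  exists [ffun a => tperm (f 0) 0 (f a)]; split.
    move=> a a0; rewrite ffunE; apply/eqP=> e.
    have : tperm (f 0) 0 (f a) = tperm (f 0) 0 (f 0) by rewrite e tpermL.
    by move/perm_inj/finj=> ea; rewrite ea eqxx in a0.
  move=> a b _ _; rewrite !ffunE => /eqP; rewrite addr_eq0 oppr_pchar2 //.
  by move/eqP/perm_inj/finj.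
exists [ffun _ => 1]; split=> [a _|a b _ _]; rewrite !ffunE ?oner_neq0 //.
move=> e; case/negP: nc2; rewrite inE /=; apply/eqP.
by rewrite -e.
Qed.
End Psi.
Section Main.
Import GRing.Theory.
Local Open Scope ring_scope.
Variables (n : nat) (F : 'I_n -> finFieldType) (i0 : 'I_n).
Hypothesis i0v : nat_of_ord i0 = 0%N.

Lemma regularE (x : prodF F) : regular x = [forall i, x i != 0].
Proof.
rewrite /regular /zero_divisor.
apply/idP/idP.
  rewrite negb_or => /andP[_ /existsPn ny]; apply/forallP=> i; apply/negP=> /eqP xi.
  have := ny [ffun j => if j == i then 1 else 0]; rewrite negb_and negbK.
  case/orP.
    by move/eqP/ffunP/(_ i); rewrite !ffunE eqxx => /eqP; rewrite oner_eq0.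
  case/negP; apply/eqP/ffunP=> j; rewrite !ffunE.
  by case: eqVneq => [->|_]; rewrite ?xi ?mul0r ?mulr0.
move/forallP=> nz; rewrite negb_or; apply/andP; split.
  apply/negP=> /eqP e; have := congr1 (fun f : prodF F => f i0) e; rewrite ffunE => h.
  by have := nz i0; rewrite h eqxx.
apply/existsPn=> y; apply/negP=> /andP[ny /eqP e]; case/negP: ny.
apply/eqP/ffunP=> j; have := congr1 (fun f : prodF F => f j) e; rewrite !ffunE => /eqP.
by rewrite mulf_eq0 (negbTE (nz j)) /= => /eqP.
Qed.

Definition Sset : {set prodF F} :=
  [set z : prodF F | [forall i, z i != 0] && (z i0 == 1)].

Lemma card_S : #|Sset| = (\prod_(i < n | (0 < i)%N) (#|F i| - 1))%N.
Proof.
pose A (i : 'I_n) := [pred a : F i | (a != 0) && ((i == i0) ==> (a == 1))].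
have -> : #|Sset| = #|(family A : simpl_pred (prodF F))|.
  apply: eq_card => z; rewrite inE; apply/andP/familyP.
    case=> /forallP nz /eqP z0 i; rewrite /A inE nz /=.
    by apply/implyP=> /eqP ei; move: z0; rewrite -ei => ->.
  move=> h; split; first by apply/forallP=> i; have /andP[] := h i.
  by have /andP[_ /implyP /(_ (eqxx _))] := h i0.
rewrite card_family foldrE big_map big_enum /=.
rewrite (bigD1 i0) //= big_mkcond [RHS]big_mkcond /=.
have -> : #|A i0| = 1%N.
  rewrite -(card1 (1 : F i0)); apply: eq_card => a.
  rewrite !inE /= eqxx implyTb; case: (a =P 1) => [->|]; rewrite ?oner_eq0 ?andbF //.
rewrite mul1n; apply: eq_bigr => i _; rewrite -val_eqE /= i0v lt0n.
case: (i =P i0) => [->|ni]; first by rewrite i0v eqxx.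
have hi : (nat_of_ord i != 0%N).
  by apply/negP=> /eqP h; apply: ni; apply: val_inj; rewrite /= h i0v.
rewrite hi /= subn1 -(cardC1 (0 : F i)); apply: eq_card => a.
by rewrite !inE /= (negbTE hi) /= -topredE /= andbT.
Qed.

Hypothesis hsize : forall i j : 'I_n, (i <= j)%N -> (#|F i| <= #|F j|)%N.
Hypothesis hchar : forall i : 'I_n, nat_of_ord i = 0%N -> 2%N \in [pchar (F i)].

Lemma S_clique : is_clique (regular (F:=F)) (total_adj (F:=F)) Sset.
Proof.
apply/andP; split.
  apply/subsetP=> z; rewrite inE => /andP[h _]; rewrite -regularE in h; exact: h.
apply/forall_inP=> x; rewrite inE => /andP[_ /eqP x0].
apply/forall_inP=> y; rewrite inE => /andP[_ /eqP y0]; apply/implyP=> _.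
rewrite /total_adj -[zero_divisor _]negbK -/(regular _) regularE negb_forall.
by apply/existsP; exists i0; rewrite negbK ffunE x0 y0 addrr_pchar2 ?hchar.
Qed.

Definition Pb (i : 'I_n) (p : {ffun F i0 -> F i}) : bool :=
  [forall a, (a != 0) ==> (p a != 0)] &&
  [forall a, forall b, [&& a != 0, b != 0 & p a + p b == 0] ==> (a == b)].

Lemma Pb_ex i : exists p, Pb (i:=i) p.
Proof.
have [p [h1 h2]] := psi_ex (hsize (i:=i0) (j:=i) (eq_ind_r (fun m => (m <= i)%N) (leq0n i) i0v)).
exists p; apply/andP; split; apply/forallP=> a.
  by apply/implyP; apply: h1.
apply/forallP=> b; apply/implyP=> /and3P[a0 b0 /eqP e]; apply/eqP; exact: h2.
Qed.

Definition psi (i : 'I_n) : {ffun F i0 -> F i} := xchoose (Pb_ex i).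

Lemma psiP (i : 'I_n) : (forall a, a != 0 -> psi i a != 0) /\
     (forall a b, a != 0 -> b != 0 -> psi i a + psi i b = 0 -> a = b).
Proof.
have /andP[/forallP h1 /forallP h2] := xchooseP (Pb_ex i); split.
  by move=> a; apply/implyP.
move=> a b a0 b0 e; apply/eqP; have /forallP/(_ b)/implyP := h2 a; apply.
by rewrite a0 b0 e eqxx.
Qed.

Definition tmap (x : prodF F) : prodF F :=
  [ffun i => if i == i0 then 1 else x i * psi i (x i0)].

Lemma tmap_S x : regular x -> tmap x \in Sset.
Proof.
rewrite regularE => /forallP nz; rewrite inE ffunE eqxx eqxx andbT.
apply/forallP=> i; rewrite ffunE; case: (i =P i0) => _; first exact: oner_neq0.
by rewrite mulf_neq0 ?nz //; exact: (proj1 (psiP i) (x i0) (nz i0)).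
Qed.

Lemma tmap_sep x y : regular x -> regular y -> x != y -> tmap x = tmap y ->
  regular (padd x y).
Proof.
rewrite !regularE => /forallP nx /forallP ny nxy e.
have ei i : i != i0 -> x i * psi i (x i0) = y i * psi i (y i0).
  move=> ni; have := congr1 (fun f : prodF F => f i) e; rewrite !ffunE.
  by rewrite (negbTE ni).
have n0 : x i0 != y i0.
  apply/negP=> /eqP e0; case/negP: nxy; apply/eqP/ffunP=> i.
  case: (i =P i0) => [->|/eqP ni] //; have := ei i ni; rewrite e0.
  by move/(mulIf (proj1 (psiP i) _ (ny i0))).
apply/forallP=> i; rewrite ffunE; case: (i =P i0) => [->|/eqP ni].
  by rewrite -[y i0](oppr_pchar2 (hchar i0v)) subr_eq0.
apply/negP=> /eqP s0; have yi : y i = - x i by apply/eqP; rewrite -addr_eq0 addrC s0.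
have := ei i ni; rewrite yi mulNr => /eqP; rewrite -addr_eq0 -mulrDr mulf_eq0 (negbTE (nx i)) /=.
by move/eqP/((proj2 (psiP i)) _ _ (nx i0) (ny i0))/eqP; rewrite (negbTE n0).
Qed.

Lemma S_col : colorable (regular (F:=F)) (total_adj (F:=F)) #|Sset|.
Proof.
pose pone : prodF F := [ffun i => (1 : F i)].
have one_in : pone \in Sset.
  rewrite inE ffunE eqxx andbT; apply/forallP=> i; rewrite ffunE oner_neq0 //.
apply/existsP; exists [ffun x => enum_rank_in one_in (tmap x)].
apply/forallP=> x; apply/forallP=> y; apply/implyP=> /and4P[xr yr nxy ad].
rewrite !ffunE; apply/negP=> /eqP e.
have := enum_rank_in_inj (tmap_S xr) (tmap_S yr) e.
move/(tmap_sep xr yr nxy); rewrite /regular; by move: ad; rewrite /total_adj => ->.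
Qed.
End Main.

Local Open Scope ring_scope.

Theorem lemma19 (n : nat) (F : 'I_n -> finFieldType)
  (hn : (2 <= n)%N)
  (hsize : forall i j : 'I_n, (i <= j)%N -> (#|F i| <= #|F j|)%N)
  (hchar : forall i : 'I_n, nat_of_ord i = 0%N -> 2%N \in [pchar (F i)]) :
  chromatic_number (regular (F:=F)) (total_adj (F:=F))
    = (\prod_(i < n | (0 < i)%N) (#|F i| - 1))%N /\
  clique_number (regular (F:=F)) (total_adj (F:=F))
    = (\prod_(i < n | (0 < i)%N) (#|F i| - 1))%N.
Proof.
have i0lt : (0 < n)%N by apply: leq_trans hn.
pose i0 : 'I_n := Ordinal i0lt.
have i0v : nat_of_ord i0 = 0%N by [].
have h1 := clique_ge (S_clique i0v hchar).
have h2 := chrom_le (S_col i0v hsize hchar) (max_card _).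
have h3 := clique_le_chrom (regular (F:=F)) (total_adj (F:=F)).
rewrite (card_S F i0v) in h1 h2.
split; apply/eqP; rewrite eqn_leq; apply/andP; split => //.
- exact: leq_trans h1 h3.
- exact: leq_trans h3 h2.
Qed.
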